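(* Let $N\ge16$ be an integer and $\rho\in[2/3,1)$. Then for every $k\ge0$, $1\le j\le 2^k$ and every $y\in L^k_j$, $$H_\flat\widehat\omega(y)=\int K_\flat(y-x)\,d\widehat\omega(x)=0$$ (the integral being absolutely convergent since $y$ has positive distance from $\mathsf E^{(N)}$). In particular $H_\flat\widehat\omega(\dot z^k_j)=0$ for all $k,j$.
   Context: Cantor intervals: fix an integer $N\ge16$ and $\rho\in[2/3,1)$. Set $I^0_1=[0,1]$. Each interval $I=[a,a+N^{-k}]$ of generation $k$ has two children of generation $k+1$: the left child $I_-=[a,a+N^{-k-1}]$ and the right child $I_+=[a+N^{-k}-N^{-k-1},a+N^{-k}]$. The $2^k$ intervals of generation $k$ are denoted $I^k_j$, $1\le j\le 2^k$, numbered left to right; $\mathcal D$ is the collection of all of them. $G^k_j$ is the open middle gap $I^k_j\setminus((I^k_j)_-\cup(I^k_j)_+)$, $\dot z^k_j$ is the common center of $I^k_j$ and $G^k_j$, and $L^k_j=[\dot z^k_j-N^{-k-1},\dot z^k_j+N^{-k-1}]$. The Cantor set is $\mathsf E^{(N)}=\bigcap_{k}\bigcup_{j}I^k_j$. Redistributed Cantor measure: with $\eta=1/N$, $\widehat\omega$ is the unique Borel probability measure supported on $\mathsf E^{(N)}$ such that $\widehat\omega(I^1_1)=\widehat\omega(I^1_2)=\frac12$ and for every $I\in\mathcal D$ of generation $\ge1$: if $I$ is the left child of its parent then $\widehat\omega(I_-)=\frac{1+\eta}2\widehat\omega(I)$, $\widehat\omega(I_+)=\frac{1-\eta}2\widehat\omega(I)$;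 if $I$ is the right child of its parent then $\widehat\omega(I_-)=\frac{1-\eta}2\widehat\omega(I)$, $\widehat\omega(I_+)=\frac{1+\eta}2\widehat\omega(I)$. Flattened kernel: $K_\flat$ is defined first on $[N^{-1/2},N^{1/2}]$ as a smooth nonincreasing function with values in $[N^{-1/2},N^{1/2}]$ such that $K_\flat(x)=1/x$ for $N^{-1/2}\le x\le(\rho N)^{-1/2}$ and for $(\rho N)^{1/2}\le x\le N^{1/2}$, and $K_\flat(x)=1$ for $(\rho^2N)^{-1/2}\le x\le(\rho^2N)^{1/2}$; then extended to $(0,\infty)$ by $K_\flat(x)=N^{-k}K_\flat(N^{-k}x)$ for $x\in[N^{k-1/2},N^{k+1/2}]$, $k\in\mathbb Z$, and to $\mathbb R\setminus\{0\}$ as an odd function. $H_\flat\mu(x)=\int K_\flat(x-y)\,d\mu(y)$. *)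

(* Defs.v *)
From Stdlib Require Import Reals Lra Lia ZArith Arith.
Open Scope R_scope.

(* Generation-k Cantor intervals, indexed 0-based: j in {0,...,2^k-1}
   corresponds to the paper's I^k_{j+1}.  The children of (k,j) are
   (k+1,2j) (left child) and (k+1,2j+1) (right child). *)

Fixpoint cantor_left (N : nat) (k j : nat) : R :=
  match k with
  | O => 0
  | S k' => cantor_left N k' (Nat.div2 j)
            + (if Nat.odd j then / INR N ^ k' - / INR N ^ k else 0)
  end.

Definition cantor_center (N k j : nat) : R :=
  cantor_left N k j + / INR N ^ k / 2.

(* hat omega (I^k_j): the redistributed Cantor measure.
   omega(I^0)=1, omega(I^1_j)=1/2, and for generation >= 1 a child
   receives (1+eta)/2 of its parent's mass iff it is on the same side
   (left/right) as its parent is w.r.t. the grandparent, else (1-eta)/2. *)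
Fixpoint omega_hat (N : nat) (k j : nat) : R :=
  match k with
  | O => 1
  | S O => / 2
  | S ((S _) as k') =>
      omega_hat N k' (Nat.div2 j) *
      (if Bool.eqb (Nat.odd j) (Nat.odd (Nat.div2 j))
       then (1 + / INR N) / 2 else (1 - / INR N) / 2)
  end.

Fixpoint sumR (m : nat) (f : nat -> R) : R :=
  match m with
  | O => 0
  | S m' => sumR m' f + f m'
  end.

Definition omega_sum (N : nat) (g : R -> R) (n : nat) : R :=
  sumR (2 ^ n) (fun j => omega_hat N n j * g (cantor_left N n j)).

(* "int g d(hat omega) = l" for g continuous near the Cantor set:
   the generation-n Riemann sums converge to l. *)
Definition omega_integral_is (N : nat) (g : R -> R) (l : R) : Prop :=
  Un_cv (omega_sum N g) l.

Definition smooth_on (f : R -> R) (a b : R) : Prop :=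
  exists F : nat -> R -> R, F O = f /\
    forall (n : nat) (x : R), a < x < b -> derivable_pt_lim (F n) x (F (S n) x).

Definition is_K_flat (N : nat) (rho : R) (K : R -> R) : Prop :=
  let sN := sqrt (INR N) in
  smooth_on K (/ sN) sN /\
  (forall x y, / sN <= x <= y -> y <= sN -> K y <= K x) /\
  (forall x, / sN <= x <= sN -> / sN <= K x <= sN) /\
  (forall x, / sN <= x <= / sqrt (rho * INR N) -> K x = / x) /\
  (forall x, sqrt (rho * INR N) <= x <= sN -> K x = / x) /\
  (forall x, / sqrt (rho ^ 2 * INR N) <= x <= sqrt (rho ^ 2 * INR N) -> K x = 1) /\
  (forall (k : Z) x, powerRZ (INR N) k / sN <= x <= powerRZ (INR N) k * sN ->
     K x = powerRZ (INR N) (- k) * K (powerRZ (INR N) (- k) * x)) /\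
  (forall x, x <> 0 -> K (- x) = - K x).

(* Main.v *)
Require Import Defs.
From Stdlib Require Import Reals Lra Lia ZArith Arith.
Open Scope R_scope.

Definition sc (N m : nat) : R := / INR N ^ m.

Lemma cl_S N m j : cantor_left N (S m) j = cantor_left N m (Nat.div2 j) +
  (if Nat.odd j then sc N m - sc N (S m) else 0).
Proof. reflexivity. Qed.

Lemma cl_even N m a : cantor_left N (S m) (2 * a) = cantor_left N m a.
Proof. rewrite cl_S, Nat.div2_double, Nat.odd_even; lra. Qed.

Lemma cl_odd N m a : cantor_left N (S m) (2 * a + 1) = cantor_left N m a + sc N m - sc N (S m).
Proof. rewrite cl_S, Nat.div2_odd', Nat.odd_odd; lra. Qed.

Lemma sc_pos N m : (1 <= N)%nat -> 0 < sc N m.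
Proof. intros H. unfold sc. apply Rinv_0_lt_compat, pow_lt. apply lt_0_INR; lia. Qed.

Lemma sc_S N m : (1 <= N)%nat -> sc N (S m) = sc N m * / INR N.
Proof. intros H. unfold sc. simpl. rewrite Rinv_mult. ring. Qed.

Lemma sc_S_le N m : (16 <= N)%nat -> 0 < sc N (S m) <= sc N m / 16.
Proof.
  intros H. split. apply sc_pos; lia.
  rewrite sc_S by lia. assert (0 < sc N m) by (apply sc_pos; lia).
  assert (16 <= INR N) by (replace 16 with (INR 16) by (simpl; lra); apply le_INR; lia).
  unfold Rdiv. apply Rmult_le_compat_l. lra.
  apply Rinv_le_contravar; lra.
Qed.

Lemma om_additive N m a : (1 <= N)%nat ->
  omega_hat N (S m) (2 * a) + omega_hat N (S m) (2 * a + 1) = omega_hat N m a.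
Proof.
  intros H. destruct m as [|m].
  - simpl. lra.
  - change (omega_hat N (S (S m)) (2*a)) with
      (omega_hat N (S m) (Nat.div2 (2*a)) *
      (if Bool.eqb (Nat.odd (2*a)) (Nat.odd (Nat.div2 (2*a)))
       then (1 + / INR N) / 2 else (1 - / INR N) / 2)).
    change (omega_hat N (S (S m)) (2*a+1)) with
      (omega_hat N (S m) (Nat.div2 (2*a+1)) *
      (if Bool.eqb (Nat.odd (2*a+1)) (Nat.odd (Nat.div2 (2*a+1)))
       then (1 + / INR N) / 2 else (1 - / INR N) / 2)).
    rewrite Nat.div2_double, Nat.div2_odd', Nat.odd_even, Nat.odd_odd.
    destruct (Nat.odd a); simpl; field; apply not_0_INR; lia.
Qed.

Definition Tv N m a : R :=
  match m with O => 0 | S m' => INR N ^ m' * (if Nat.odd a then -1 else 1) * omega_hat N (S m') a end.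

Lemma om_diff N m a : (1 <= N)%nat ->
  INR N ^ m * (omega_hat N (S m) (2 * a) - omega_hat N (S m) (2 * a + 1)) = Tv N m a.
Proof.
  intros H. assert (INR N <> 0) by (apply not_0_INR; lia).
  destruct m as [|m].
  - simpl. lra.
  - change (omega_hat N (S (S m)) (2*a)) with
      (omega_hat N (S m) (Nat.div2 (2*a)) *
      (if Bool.eqb (Nat.odd (2*a)) (Nat.odd (Nat.div2 (2*a)))
       then (1 + / INR N) / 2 else (1 - / INR N) / 2)).
    change (omega_hat N (S (S m)) (2*a+1)) with
      (omega_hat N (S m) (Nat.div2 (2*a+1)) *
      (if Bool.eqb (Nat.odd (2*a+1)) (Nat.odd (Nat.div2 (2*a+1)))
       then (1 + / INR N) / 2 else (1 - / INR N) / 2)).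
    rewrite Nat.div2_double, Nat.div2_odd', Nat.odd_even, Nat.odd_odd.
    unfold Tv. destruct (Nat.odd a); simpl; field; auto.
Qed.

Lemma Tv_even N m a : Tv N (S m) (2 * a) = INR N ^ m * omega_hat N (S m) (2 * a).
Proof. unfold Tv. rewrite Nat.odd_even. ring. Qed.
Lemma Tv_odd N m a : Tv N (S m) (2 * a + 1) = - (INR N ^ m * omega_hat N (S m) (2 * a + 1)).
Proof. unfold Tv. rewrite Nat.odd_odd. ring. Qed.

Lemma sumR_ext n f g : (forall t, (t < n)%nat -> f t = g t) -> sumR n f = sumR n g.
Proof.
  induction n; intros H; simpl; auto. rewrite IHn by (intros; apply H; lia). rewrite H by lia. auto.
Qed.

Lemma sumR_split a b f : sumR (a + b) f = sumR a f + sumR b (fun t => f (a + t)%nat).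
Proof.
  induction b; simpl. rewrite Nat.add_0_r; ring.
  rewrite Nat.add_succ_r. simpl. rewrite IHb. ring.
Qed.

Definition W N (g : R -> R) m a n :=
  sumR (2 ^ n) (fun t => omega_hat N (m + n) (a * 2 ^ n + t) * g (cantor_left N (m + n) (a * 2 ^ n + t))).

Lemma W_split N g m a n : W N g m a (S n) = W N g (S m) (2 * a) n + W N g (S m) (2 * a + 1) n.
Proof.
  unfold W. replace (2 ^ S n)%nat with (2 ^ n + 2 ^ n)%nat by (simpl; lia).
  rewrite sumR_split. replace (m + S n)%nat with (S m + n)%nat by lia. f_equal.
  - apply sumR_ext; intros t _. replace (a * (2 ^ n + 2 ^ n) + t)%nat with (2 * a * 2 ^ n + t)%nat by ring. auto.
  - apply sumR_ext; intros t _. replace (a * (2 ^ n + 2 ^ n) + (2 ^ n + t))%nat with ((2 * a + 1) * 2 ^ n + t)%nat by ring. auto.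
Qed.

Lemma W_const N g n : (16 <= N)%nat -> forall m a c,
  (forall x, cantor_left N m a <= x <= cantor_left N m a + sc N m -> g x = c) ->
  W N g m a n = c * omega_hat N m a.
Proof.
  intros HN. induction n; intros m a c Hg.
  - unfold W. simpl. rewrite Nat.add_0_r, Nat.mul_1_r, Nat.add_0_r. rewrite Hg. ring.
    pose proof (sc_pos N m ltac:(lia)). lra.
  - rewrite W_split. pose proof (sc_S_le N m HN).
    rewrite (IHn (S m) (2 * a)%nat c), (IHn (S m) (2 * a + 1)%nat c).
    + rewrite <- (om_additive N m a) by lia. ring.
    + intros x Hx. apply Hg. rewrite cl_odd in Hx. lra.
    + intros x Hx. apply Hg. rewrite cl_even in Hx. lra.
Qed.

Lemma contain N d : (16 <= N)%nat -> forall m a r, (r < 2 ^ d)%nat ->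
  cantor_left N m a <= cantor_left N (m + d) (a * 2 ^ d + r) /\
  cantor_left N (m + d) (a * 2 ^ d + r) + sc N (m + d) <= cantor_left N m a + sc N m.
Proof.
  intros HN. induction d; intros m a r Hr.
  - simpl in Hr. replace r with 0%nat by lia. rewrite Nat.add_0_r, Nat.mul_1_r, Nat.add_0_r. lra.
  - pose proof (sc_S_le N m HN).
    destruct (Nat.lt_ge_cases r (2 ^ d)) as [H1|H1].
    + replace (a * 2 ^ S d + r)%nat with (2 * a * 2 ^ d + r)%nat by (simpl; ring).
      replace (m + S d)%nat with (S m + d)%nat by lia.
      destruct (IHd (S m) (2 * a)%nat r H1) as [A B]. rewrite cl_even in A, B. lra.
    + replace (a * 2 ^ S d + r)%nat with ((2 * a + 1) * 2 ^ d + (r - 2 ^ d))%nat by (simpl; simpl in Hr; nia).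
      replace (m + S d)%nat with (S m + d)%nat by lia.
      destruct (IHd (S m) (2 * a + 1)%nat (r - 2 ^ d)%nat) as [A B]. simpl in Hr; lia.
      rewrite cl_odd in A, B. lra.
Qed.

Lemma Kval N rho K : (16 <= N)%nat -> 2 / 3 <= rho < 1 -> is_K_flat N rho K ->
  forall e x, 3/8 * sc N e <= x <= 8/3 * sc N e -> K x = INR N ^ e.
Proof.
  intros HN Hr Hk e x Hx.
  destruct Hk as (_ & _ & _ & _ & _ & Hflat & Hscale & _).
  assert (H16 : 16 <= INR N) by (replace 16 with (INR 16) by (simpl; lra); apply le_INR; lia).
  assert (HsN : 4 <= sqrt (INR N)).
  { replace 4 with (sqrt (4 ^ 2)) by (apply sqrt_pow2; lra). apply sqrt_le_1_alt. lra. }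
  set (sN := sqrt (INR N)) in *.
  assert (HP : 0 < INR N ^ e) by (apply pow_lt; lra).
  assert (Hs : sc N e * INR N ^ e = 1) by (unfold sc; field; lra).
  assert (Hs0 : 0 < sc N e) by (apply sc_pos; lia).
  assert (Hpz : powerRZ (INR N) (- Z.of_nat e) = sc N e).
  { rewrite powerRZ_neg', <- pow_powerRZ. reflexivity. }
  rewrite (Hscale (- Z.of_nat e)%Z x).
  2:{ rewrite Hpz. split.
      - unfold Rdiv. apply Rle_trans with (sc N e * / 4).
        apply Rmult_le_compat_l. lra. apply Rinv_le_contravar; lra. lra.
      - apply Rle_trans with (sc N e * 4). lra. apply Rmult_le_compat_l; lra. }
  rewrite Z.opp_involutive, <- pow_powerRZ.
  rewrite Hflat. ring.
  assert (Hsq : sqrt (rho ^ 2 * INR N) = rho * sN).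
  { rewrite sqrt_mult by (try apply pow2_ge_0; lra). rewrite sqrt_pow2 by lra. reflexivity. }
  rewrite Hsq.
  assert (HrN : 8/3 <= rho * sN) by nra.
  assert (/ (rho * sN) <= 3/8).
  { replace (3/8) with (/ (8/3)) by field. apply Rinv_le_contravar; lra. }
  split; nra.
Qed.

Lemma Kneg N rho K : (16 <= N)%nat -> 2 / 3 <= rho < 1 -> is_K_flat N rho K ->
  forall e x, -(8/3) * sc N e <= x <= -(3/8) * sc N e -> K x = - INR N ^ e.
Proof.
  intros HN Hr Hk e x Hx.
  assert (Hs0 : 0 < sc N e) by (apply sc_pos; lia).
  pose proof Hk as (_ & _ & _ & _ & _ & _ & _ & Hodd).
  replace x with (- (- x)) by ring. rewrite Hodd by lra.
  rewrite (Kval N rho K HN Hr Hk e (- x)) by lra. reflexivity.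
Qed.

Lemma main_ind N rho K y : (16 <= N)%nat -> 2 / 3 <= rho < 1 -> is_K_flat N rho K ->
  forall d m a r n, (r < 2 ^ d)%nat -> (d + 1 <= n)%nat ->
  cantor_left N (m + d) (a * 2 ^ d + r) + sc N (m + d) / 2 - sc N (S (m + d)) <= y <=
  cantor_left N (m + d) (a * 2 ^ d + r) + sc N (m + d) / 2 + sc N (S (m + d)) ->
  W N (fun x => K (y - x)) m a n = Tv N m a.
Proof.
  intros HN Hr Hk. induction d; intros m a r n Hrd Hn Hy.
  - simpl in Hrd. replace r with 0%nat in Hy by lia.
    rewrite Nat.add_0_r, Nat.mul_1_r, Nat.add_0_r in Hy.
    destruct n as [|n]; [lia|]. rewrite W_split.
    pose proof (sc_S_le N m HN).
    rewrite (W_const N _ n HN (S m) (2 * a)%nat (INR N ^ m)).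
    rewrite (W_const N _ n HN (S m) (2 * a + 1)%nat (- INR N ^ m)).
    + rewrite <- (om_diff N m a) by lia. ring.
    + intros x Hx. rewrite cl_odd in Hx. apply (Kneg N rho K HN Hr Hk). lra.
    + intros x Hx. rewrite cl_even in Hx. apply (Kval N rho K HN Hr Hk). lra.
  - destruct n as [|n]; [lia|]. rewrite W_split.
    pose proof (sc_S_le N m HN).
    replace (m + S d)%nat with (S m + d)%nat in Hy by lia.
    assert (Hsd : 0 < sc N (S (S m + d)) <= sc N (S m + d) / 16) by (apply sc_S_le; lia).
    destruct (Nat.lt_ge_cases r (2 ^ d)) as [H1|H1].
    + replace (a * 2 ^ S d + r)%nat with (2 * a * 2 ^ d + r)%nat in Hy by (simpl; ring).
      destruct (contain N d HN (S m) (2 * a)%nat r H1) as [A B]. rewrite cl_even in A, B.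
      rewrite (IHd (S m) (2 * a)%nat r n H1 ltac:(lia) Hy).
      rewrite (W_const N _ n HN (S m) (2 * a + 1)%nat (- INR N ^ m)).
      * rewrite Tv_even, <- (om_diff N m a) by lia. ring.
      * intros x Hx. rewrite cl_odd in Hx. apply (Kneg N rho K HN Hr Hk). lra.
    + assert (H2 : (r - 2 ^ d < 2 ^ d)%nat) by (simpl in Hrd; lia).
      replace (a * 2 ^ S d + r)%nat with ((2 * a + 1) * 2 ^ d + (r - 2 ^ d))%nat in Hy by (simpl; simpl in Hrd; nia).
      destruct (contain N d HN (S m) (2 * a + 1)%nat (r - 2 ^ d)%nat H2) as [A B]. rewrite cl_odd in A, B.
      rewrite (IHd (S m) (2 * a + 1)%nat (r - 2 ^ d)%nat n H2 ltac:(lia) Hy).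
      rewrite (W_const N _ n HN (S m) (2 * a)%nat (INR N ^ m)).
      * rewrite Tv_odd, <- (om_diff N m a) by lia. ring.
      * intros x Hx. rewrite cl_even in Hx. apply (Kval N rho K HN Hr Hk). lra.
Qed.

Theorem mainTheorem3 (N : nat) (rho : R) (K : R -> R) :
  (16 <= N)%nat -> 2 / 3 <= rho < 1 -> is_K_flat N rho K ->
  forall (k j : nat), (j < 2 ^ k)%nat ->
    (forall y : R,
       cantor_center N k j - / INR N ^ (S k) <= y <= cantor_center N k j + / INR N ^ (S k) ->
       omega_integral_is N (fun x => K (y - x)) 0) /\
    omega_integral_is N (fun x => K (cantor_center N k j - x)) 0.
Proof.
  intros HN Hr Hk k j Hj.
  assert (Hall : forall y : R,
       cantor_center N k j - / INR N ^ (S k) <= y <= cantor_center N k j + / INR N ^ (S k) ->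
       omega_integral_is N (fun x => K (y - x)) 0).
  { intros y Hy. intros eps Heps. exists (S k). intros n Hn.
    assert (E : omega_sum N (fun x => K (y - x)) n = W N (fun x => K (y - x)) 0 0 n) by reflexivity.
    rewrite E, (main_ind N rho K y HN Hr Hk k 0 0 j n Hj ltac:(lia) Hy).
    unfold R_dist. simpl. rewrite Rminus_0_r, Rabs_R0. exact Heps. }
  split; [exact Hall|]. apply Hall.
  assert (0 < / INR N ^ S k) by (apply (sc_pos N (S k)); lia). lra.
Qed.
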